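(* Let $(U,V)$ be a pair of random variables taking values in finite sets $\mathcal{U}\times\mathcal{V}$ with joint probability mass function $p(u,v)$ and marginals $p(u),p(v)$. Let $\mathcal{U}_1,\dots,\mathcal{U}_{\tilde N_u}$ be a partition of $\mathcal{U}$ into nonempty pairwise disjoint blocks and $\mathcal{V}_1,\dots,\mathcal{V}_{\tilde N_v}$ a partition of $\mathcal{V}$ into nonempty pairwise disjoint blocks (the synonymous mappings), with associated semantic variables $\tilde U,\tilde V$. Then (chain rule of mutual information) $$I_s(\tilde U;\tilde V)\le H_s(\tilde V)-H(V\mid U)\le I(U;V)\le H(V)-H_s(\tilde V\mid U)\le I^s(\tilde U;\tilde V),$$ where $I(U;V)$ is the Shannon mutual information and $H(V)$, $H(V\mid U)$ are Shannon entropies.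
   Context: Write $p(\mathcal{U}_{i_s})=\sum_{u\in\mathcal{U}_{i_s}}p(u)$, $p(\mathcal{V}_{j_s})=\sum_{v\in\mathcal{V}_{j_s}}p(v)$, $p(\mathcal{U}_{i_s}\times\mathcal{V}_{j_s})=\sum_{(u,v)\in\mathcal{U}_{i_s}\times\mathcal{V}_{j_s}}p(u,v)$. Semantic entropies: $H_s(\tilde U)=-\sum_{i_s}p(\mathcal{U}_{i_s})\log p(\mathcal{U}_{i_s})$, $H_s(\tilde V)=-\sum_{j_s}p(\mathcal{V}_{j_s})\log p(\mathcal{V}_{j_s})$, $H_s(\tilde U,\tilde V)=-\sum_{i_s,j_s}p(\mathcal{U}_{i_s}\times\mathcal{V}_{j_s})\log p(\mathcal{U}_{i_s}\times\mathcal{V}_{j_s})$. Semantic conditional entropy: $H_s(\tilde V\mid U)=-\sum_{u:p(u)>0}\sum_{j_s}p(u)\,p(\mathcal{V}_{j_s}\mid u)\log p(\mathcal{V}_{j_s}\mid u)$ with $p(\mathcal{V}_{j_s}\mid u)=\sum_{v\in\mathcal{V}_{j_s}}p(v\mid u)$. Up semantic mutual information: $I^s(\tilde U;\tilde V)=H(U)+H(V)-H_s(\tilde U,\tilde V)$. Down semantic mutual information: $I_s(\tilde U;\tilde V)=H_s(\tilde U)+H_s(\tilde V)-H(U,V)$ (which may be negative). Logarithms are to base 2 and $0\log 0=0$. *)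

(* Defs.v *)
From mathcomp Require Import all_boot all_order all_algebra.
From mathcomp Require Import reals exp.
Set Implicit Arguments. Unset Strict Implicit. Unset Printing Implicit Defensive.
Import Order.TTheory GRing.Theory Num.Theory.
Local Open Scope ring_scope.

Section Info.
Variables (R : realType) (U V : finType) (p : U -> V -> R).

Definition log2 (x : R) : R := ln x / ln 2.

Definition xlogx (x : R) : R := if x == 0 then 0 else x * log2 x.

Definition pU (u : U) : R := \sum_(v : V) p u v.
Definition pV (v : V) : R := \sum_(u : U) p u v.

Definition H_U : R := - \sum_(u : U) xlogx (pU u).
Definition H_V : R := - \sum_(v : V) xlogx (pV v).
Definition H_UV : R := - \sum_(u : U) \sum_(v : V) xlogx (p u v).
Definition H_V_given_U : R :=
  - \sum_(u : U | 0 < pU u) \sum_(v : V) pU u * xlogx (p u v / pU u).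
Definition I_UV : R := H_U + H_V - H_UV.

Variables (PU : {set {set U}}) (PV : {set {set V}}).

Definition pUblk (A : {set U}) : R := \sum_(u in A) pU u.
Definition pVblk (B : {set V}) : R := \sum_(v in B) pV v.
Definition pUVblk (A : {set U}) (B : {set V}) : R :=
  \sum_(u in A) \sum_(v in B) p u v.

Definition Hs_U : R := - \sum_(A in PU) xlogx (pUblk A).
Definition Hs_V : R := - \sum_(B in PV) xlogx (pVblk B).
Definition Hs_UV : R := - \sum_(A in PU) \sum_(B in PV) xlogx (pUVblk A B).
Definition Hs_V_given_U : R :=
  - \sum_(u : U | 0 < pU u) \sum_(B in PV)
      pU u * xlogx (\sum_(v in B) (p u v / pU u)).

Definition Iup_s : R := H_U + H_V - Hs_UV.
Definition Idown_s : R := Hs_U + Hs_V - H_UV.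

End Info.

(* Main.v *)
Require Import Defs.
From mathcomp Require Import all_boot all_order all_algebra.
From mathcomp Require Import reals exp.
From mathcomp Require Import ring lra.
Import Order.TTheory GRing.Theory Num.Theory.
Set Implicit Arguments. Unset Strict Implicit.
Local Open Scope ring_scope.

Section H.
Variable R : realType.

Lemma ln2_gt0 : 0 < ln (2 : R).
Proof. by apply: ln_gt0; rewrite ltr1n. Qed.

Lemma log2_le (x y : R) : 0 < x -> x <= y -> log2 x <= log2 y.
Proof.
move=> x0 xy; rewrite /log2 ler_pM2r ?invr_gt0 ?ln2_gt0 //.
by rewrite ler_ln // posrE (lt_le_trans x0 xy).
Qed.

Lemma xlogx0 : xlogx (0 : R) = 0.
Proof. by rewrite /xlogx eqxx. Qed.

Lemma xlogx_sup (a b : R) : 0 <= a -> 0 <= b -> xlogx a + xlogx b <= xlogx (a + b).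
Proof.
rewrite le0r => /orP[/eqP->|a0]; first by rewrite xlogx0 !add0r.
rewrite le0r => /orP[/eqP->|b0]; first by rewrite xlogx0 !addr0.
have ab0 : 0 < a + b by rewrite addr_gt0.
rewrite /xlogx (gt_eqF a0) (gt_eqF b0) (gt_eqF ab0) mulrDl.
apply: lerD; rewrite ler_pM2l //; apply: log2_le => //; lra.
Qed.

Lemma xlogx_sum (I : Type) (r : seq I) (P : pred I) (x : I -> R) :
  (forall i, P i -> 0 <= x i) ->
  \sum_(i <- r | P i) xlogx (x i) <= xlogx (\sum_(i <- r | P i) x i).
Proof.
move=> x0.
suff : 0 <= \sum_(i <- r | P i) x i /\
   \sum_(i <- r | P i) xlogx (x i) <= xlogx (\sum_(i <- r | P i) x i) by case.
apply: (big_rec2 (fun y2 y1 => 0 <= y1 /\ y2 <= xlogx y1)).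
  by rewrite xlogx0.
move=> i y1 y2 Pi [h1 h2]; split; first by rewrite addr_ge0 // x0.
have := xlogx_sup (x0 _ Pi) h1; apply: le_trans; by rewrite lerD2l.
Qed.

Lemma xlogx_chain (I : finType) (P : pred I) (x : I -> R) :
  (forall i, P i -> 0 <= x i) ->
  let s := \sum_(i | P i) x i in
  \sum_(i | P i) xlogx (x i) =
    xlogx s + (if 0 < s then \sum_(i | P i) s * xlogx (x i / s) else 0).
Proof.
move=> x0 s.
have s0 : 0 <= s by rewrite sumr_ge0.
case: ifP => [spos|]; last first.
  move=> /negbT; rewrite -leNgt => sle.
  have se : s = 0 by apply/le_anti; rewrite sle s0.
  have xi0 : forall i, P i -> x i = 0.
    move=> i Pi; apply/eqP; move: se; rewrite /s (bigD1 i) //=.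
    move/eqP; rewrite paddr_eq0 ?x0 // ?sumr_ge0 // => [/andP[]//|j /andP[Pj _]].
    exact: x0.
  rewrite se xlogx0 !addr0 big1 // => i Pi; by rewrite xi0 // xlogx0.
have -> : xlogx s = \sum_(i | P i) x i * log2 s.
  by rewrite -mulr_suml /xlogx (gt_eqF spos).
rewrite -big_split /=; apply: eq_bigr => i Pi.
have := x0 i Pi; rewrite le0r => /orP[/eqP->|xpos].
  by rewrite !(mul0r, xlogx0, mulr0, add0r).
have q0 : 0 < x i / s by rewrite divr_gt0.
rewrite /xlogx (gt_eqF xpos) (gt_eqF q0) /log2 ln_div ?posrE //.
field; rewrite ?(gt_eqF spos) ?(gt_eqF ln2_gt0) //.
Qed.

Lemma sum_part (T : finType) (P : {set {set T}}) (f : T -> R) :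
  partition P [set: T] -> \sum_i f i = \sum_(A in P) \sum_(i in A) f i.
Proof.
case/and3P => /eqP cov triv _.
by rewrite -big_trivIset // cov; apply: eq_bigl => i; rewrite in_setT.
Qed.

Lemma coarse (T : finType) (P : {set {set T}}) (f : T -> R) :
  partition P [set: T] -> (forall i, 0 <= f i) ->
  \sum_i xlogx (f i) <= \sum_(A in P) xlogx (\sum_(i in A) f i).
Proof.
move=> hP f0; rewrite (sum_part _ hP); apply: ler_sum => A _.
exact: xlogx_sum.
Qed.
End H.

Theorem theorem2 (R : realType) (U V : finType) (p : U -> V -> R)
  (PU : {set {set U}}) (PV : {set {set V}}) :
  (forall u v, 0 <= p u v) ->
  \sum_(u : U) \sum_(v : V) p u v = 1 ->
  partition PU [set: U] ->
  partition PV [set: V] ->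
  [/\ Idown_s p PU PV <= Hs_V p PV - H_V_given_U p,
      Hs_V p PV - H_V_given_U p <= I_UV p,
      I_UV p <= H_V p - Hs_V_given_U p PV
    & H_V p - Hs_V_given_U p PV <= Iup_s p PU PV].
Proof.
move=> hp _ hPU hPV.
have pU0 : forall u, 0 <= pU p u by move=> u; rewrite sumr_ge0.
have pV0 : forall v, 0 <= pV p v by move=> v; rewrite sumr_ge0.
have chainU : \sum_u \sum_v xlogx (p u v) =
   \sum_u xlogx (pU p u) + \sum_(u | 0 < pU p u) \sum_v pU p u * xlogx (p u v / pU p u).
  rewrite [X in _ + X]big_mkcond /= -big_split; apply: eq_bigr => u _.
  exact: (xlogx_chain (P := predT) (fun v _ => hp u v)).
have HUV : H_UV p = H_U p + H_V_given_U p.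
  by rewrite /H_UV /H_U /H_V_given_U chainU opprD.
have hsU : Hs_U p PU <= H_U p.
  by rewrite /Hs_U /H_U lerN2; apply: coarse.
have hsV : Hs_V p PV <= H_V p.
  by rewrite /Hs_V /H_V lerN2; apply: coarse.
have cond : Hs_V_given_U p PV <= H_V_given_U p.
  rewrite /Hs_V_given_U /H_V_given_U lerN2; apply: ler_sum => u upos.
  rewrite (sum_part _ hPV); apply: ler_sum => B _.
  rewrite -mulr_sumr ler_wpM2l //; apply: xlogx_sum => v _.
  by rewrite divr_ge0.
have joint : Hs_UV p PU PV <= H_U p + Hs_V_given_U p PV.
  pose q u (B : {set V}) := \sum_(v in B) p u v.
  have q0 : forall u B, 0 <= q u B by move=> u B; rewrite sumr_ge0.
  have ch : \sum_u \sum_(B in PV) xlogx (q u B) =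
     \sum_u xlogx (pU p u) + \sum_(u | 0 < pU p u) \sum_(B in PV)
      pU p u * xlogx (\sum_(v in B) (p u v / pU p u)).
    rewrite [X in _ + X]big_mkcond /= -big_split; apply: eq_bigr => u _.
    have hs : \sum_(B in PV) q u B = pU p u by rewrite /pU (sum_part _ hPV).
    rewrite (xlogx_chain (P := mem PV) (fun B _ => q0 u B)) /= hs.
    case: ifP => _ //.
    by apply: congr1; apply: eq_bigr => B _; rewrite /q -mulr_suml.
  rewrite /Hs_UV /Hs_V_given_U /H_U -opprD -ch lerN2.
  rewrite [X in X <= _](sum_part _ hPU).
  have -> : \sum_(A in PU) \sum_(B in PV) xlogx (pUVblk p A B) =
     \sum_(A in PU) \sum_(B in PV) xlogx (\sum_(u in A) q u B) by [].

  apply: ler_sum => A _; rewrite exchange_big /=; apply: ler_sum => B _.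
  by apply: xlogx_sum => u _.
rewrite /Idown_s /I_UV /Iup_s HUV; split; lra.
Qed.
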